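(* Let $0\le k<n$, let $P_1,\dots,P_n$ be pairwise distinct columns of $\mathbb{S}$, and let $y_1\in P_1,\dots,y_k\in P_k$. Let $(\varepsilon_i^j)$ be any family in $\{0,1\}$ indexed by pairs $1\le i<j\le n$ with $j>k$. Then there exist $y_{k+1}\in P_{k+1},\dots,y_n\in P_n$ such that for all $1\le i<j\le n$ with $j>k$: $y_i\to y_j$ iff $\varepsilon_i^j=1$.
   Context: Directed graphs are simple and loopless ($x\to y$ denotes a directed edge, at most one direction between two distinct vertices). $\mathcal{S}$ is the class of finite such graphs in which $x\perp y:\Leftrightarrow\neg(x\to y\vee y\to x)$ is an equivalence relation (its classes are called columns) and satisfying the parity condition: for $x_1\neq x_2$, $y_1\neq y_2$ with $x_1\perp x_2$, $y_1\perp y_2$, the number of directed edges from $\{x_1,x_2\}$ to $\{y_1,y_2\}$ is even. $\mathbb{S}$ (the semigeneric directed graph) is the Fraïssé limit of $\mathcal{S}$, i.e. the countable homogeneous directed graph whose finite induced substructures are exactly the members of $\mathcal{S}$ up to isomorphism. *)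

(* Defs.v *)
From mathcomp Require Import all_boot.
Set Implicit Arguments. Unset Strict Implicit. Unset Printing Implicit Defensive.

Definition perp (V : Type) (E : rel V) (x y : V) : bool := ~~ E x y && ~~ E y x.

Definition dgraph (V : Type) (E : rel V) : Prop :=
  irreflexive E /\ (forall x y, E x y -> ~~ E y x).

Definition parity_cond (V : Type) (E : rel V) : Prop :=
  forall x1 x2 y1 y2, x1 <> x2 -> y1 <> y2 -> perp E x1 x2 -> perp E y1 y2 ->
    ~~ odd (E x1 y1 + E x1 y2 + E x2 y1 + E x2 y2).

Definition in_S (T : finType) (e : rel T) : Prop :=
  dgraph e /\
  (reflexive (perp e) /\ symmetric (perp e) /\ transitive (perp e)) /\
  parity_cond e.

Definition embedding (T V : Type) (e : rel T) (E : rel V) (f : T -> V) : Prop :=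
  injective f /\ (forall a b, e a b = E (f a) (f b)).

Definition induced_sub (V : countType) (E : rel V) (s : seq V) : rel (@seq_sub V s) :=
  fun a b => E (val a) (val b).

Definition age_is_S (V : countType) (E : rel V) : Prop :=
  (forall s : seq V, in_S (@induced_sub V E s)) /\
  (forall (T : finType) (e : rel T), in_S e -> exists f : T -> V, embedding e E f).

Definition homogeneous (V : countType) (E : rel V) : Prop :=
  forall (T : finType) (e : rel T) (f g : T -> V),
    embedding e E f -> embedding e E g ->
    exists sigma : V -> V,
      bijective sigma /\ (forall x y, E x y = E (sigma x) (sigma y)) /\
      (forall a, sigma (f a) = g a).

(* (V,E) is (a copy of) the semigeneric directed graph: countable, homogeneous,
   with age S; by Fraisse's theorem this determines it up to isomorphism. *)
Definition is_semigeneric (V : countType) (E : rel V) : Prop :=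
  dgraph E /\ age_is_S E /\ homogeneous E.

Definition is_column (V : Type) (E : rel V) (C : V -> Prop) : Prop :=
  exists x, forall y, C y <-> perp E x y.

(* Main.v *)
Require Import Defs.
From mathcomp Require Import all_boot.

Section Aux.
Variables (V : countType) (E : rel V).

Lemma perpC x y : perp E x y = perp E y x.
Proof. by rewrite /perp andbC. Qed.

Lemma perp_refl : dgraph E -> forall x, perp E x x.
Proof. by move=> [Hirr _] x; rewrite /perp Hirr. Qed.

Lemma perp_trans : is_semigeneric E -> transitive (perp E).
Proof.
move=> [_ [[Hage _] _]] y x z Hxy Hyz.
pose s := [:: x; y; z].
have hx : x \in s by rewrite !inE eqxx.
have hy : y \in s by rewrite !inE eqxx orbT.
have hz : z \in s by rewrite !inE eqxx !orbT.
have [_ [[_ [_ Htr]] _]] := Hage s.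
exact: (Htr (@SeqSub _ s y hy) (@SeqSub _ s x hx) (@SeqSub _ s z hz) Hxy Hyz).
Qed.

Lemma ext_lemma : is_semigeneric E -> forall (s : seq V) (e : rel (option (seq_sub s))),
  in_S e -> (forall a b, e (Some a) (Some b) = E (val a) (val b)) ->
  exists v, forall a, E v (val a) = e None (Some a) /\ E (val a) v = e (Some a) None.
Proof.
move=> [_ [[_ Hage] Hhom]] s e He HeE.
have [g [ginj gE]] := Hage _ e He.
have H1 : embedding (@induced_sub V E s) E (fun a => g (Some a)).
  split; first by move=> a b /ginj [].
  by move=> a b; rewrite -gE.
have H2 : embedding (@induced_sub V E s) E val by split; [exact: val_inj|].
have [sigma [_ [HsE Hsf]]] := Hhom _ _ _ _ H1 H2.
exists (sigma (g None)) => a; rewrite -Hsf -!HsE !gE; split => //.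
Qed.

Definition outb xj (g : V -> bool) v := ~~ perp E xj v && ~~ g v.
Definition inb xj (g : V -> bool) v := ~~ perp E xj v && g v.
Definition ee (s : seq V) xj g : rel (option (seq_sub s)) := fun o1 o2 =>
  match o1, o2 with
  | Some a, Some b => E (val a) (val b)
  | None, Some b => outb xj g (val b)
  | Some a, None => inb xj g (val a)
  | None, None => false
  end.
Definition hh (s : seq V) xj (o : option (seq_sub s)) : V :=
  if o is Some a then val a else xj.

Lemma perp_ee s xj g : dgraph E -> forall o1 o2,
  perp (ee s xj g) o1 o2 = perp E (hh s xj o1) (hh s xj o2).
Proof.
move=> HD [a|] [b|] //=.
- rewrite perpC {1}/perp /= /outb /inb.
  by case: (perp E xj (val a)); case: (g (val a)).
- rewrite {1}/perp /= /outb /inb.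
  by case: (perp E xj (val b)); case: (g (val b)).
- by rewrite perp_refl.
Qed.

Lemma ee_inS s xj g : is_semigeneric E -> xj \in s ->
  (forall a b, a \in s -> b \in s -> perp E a b -> a = b) ->
  in_S (ee s xj g).
Proof.
move=> HS hxj Hs.
have HD := HS.1.
have [Hirr Hasym] := HD.
have PT := perp_trans HS.
split; [split|split; [split; [|split]|]].
- by case=> [a|] //=; rewrite Hirr.
- move=> [a|] [b|] //=; first exact: Hasym.
  + by rewrite /inb /outb; case: (perp E xj (val a)); case: (g (val a)).
  + by rewrite /inb /outb; case: (perp E xj (val b)); case: (g (val b)).
- by move=> o; rewrite perp_ee // perp_refl.
- by move=> o1 o2; rewrite !perp_ee // perpC.
- by move=> o2 o1 o3; rewrite !perp_ee //; apply: PT.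
- have K : forall o1 o2, o1 <> o2 -> perp (ee s xj g) o1 o2 ->
      hh s xj o1 = xj /\ hh s xj o2 = xj.
    move=> [a|] [b|] Hne; rewrite perp_ee //=.
    + move=> /(Hs _ _ (ssvalP a) (ssvalP b)) /val_inj Hab.
      by exfalso; apply: Hne; rewrite Hab.
    + by rewrite perpC => /(Hs _ _ hxj (ssvalP a)) ->.
    + by move=> /(Hs _ _ hxj (ssvalP b)) ->.
  have Z : forall o1 o2, hh s xj o1 = xj -> hh s xj o2 = xj -> ee s xj g o1 o2 = false.
    move=> o1 o2 h1 h2.
    have : perp (ee s xj g) o1 o2 by rewrite perp_ee // h1 h2 perp_refl.
    by rewrite /perp => /andP [/negbTE -> _].
  move=> x1 x2 y1 y2 nx ny px py.
  have [h1 h2] := K _ _ nx px.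
  have [h3 h4] := K _ _ ny py.
  by rewrite !Z.
Qed.

End Aux.
Arguments perp_trans {V E}.
Arguments ext_lemma {V E} HS {s e}.
Arguments ee_inS {V E s xj}.
Arguments outb {V} E xj g v.
Arguments inb {V} E xj g v.

Theorem lemma1 (V : countType) (E : rel V) (HS : is_semigeneric E)
  (n k : nat) (Hkn : k < n)
  (P : 'I_n -> V -> Prop) (HP : forall i, is_column E (P i))
  (Hdist : forall i j : 'I_n, i != j -> ~ (forall x, P i x <-> P j x))
  (y : 'I_n -> V) (Hy : forall i : 'I_n, i < k -> P i (y i))
  (eps : 'I_n -> 'I_n -> bool) :
  exists z : 'I_n -> V,
    (forall i : 'I_n, i < k -> z i = y i) /\
    (forall i : 'I_n, P i (z i)) /\
    (forall i j : 'I_n, i < j -> k <= j -> E (z i) (z j) = eps i j).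
Proof.
have HD := HS.1.
have PT := perp_trans HS.
have col_closed : forall i w w', P i w -> perp E w w' -> P i w'.
  move=> i w w'; have [x Hx] := HP i.
  move=> /Hx h1 h2; apply/Hx; exact: PT h1 h2.
have col_uniq : forall i i' w, P i w -> P i' w -> i = i'.
  move=> i i' w Hi Hi'; case: (eqVneq i i') => // Hne.
  exfalso; apply: (Hdist _ _ Hne) => u.
  have [x Hx] := HP i; have [x' Hx'] := HP i'.
  move: Hi Hi' => /Hx Hi /Hx' Hi'.
  split.
  - move=> /Hx Hu; apply/Hx'; apply: (PT x) => //; apply: (PT w) => //; by rewrite perpC.
  - move=> /Hx' Hu; apply/Hx; apply: (PT x') => //; apply: (PT w) => //; by rewrite perpC.
have main : forall m, m <= n -> exists z : 'I_n -> V,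
    (forall i : 'I_n, i < k -> z i = y i) /\
    (forall i : 'I_n, i < m -> P i (z i)) /\
    (forall i j : 'I_n, i < j -> j < m -> k <= j -> E (z i) (z j) = eps i j).
  elim=> [|m IH] Hm.
    exists y; split => //; split => // i; by rewrite ltn0.
  case: (leqP k m) => Hkm; last first.
    exists y; split => //; split.
    - move=> i Hi; apply: Hy; apply: leq_trans Hi Hkm.
    - move=> i j _ Hj Hkj; exfalso.
      by move: (leq_trans Hj Hkm); rewrite ltnNge Hkj.
  have [z [Hz1 [Hz2 Hz3]]] := IH (ltnW Hm).
  pose j := Ordinal Hm.
  have [xj Hxj] := HP j.
  pose s := xj :: map z (filter (fun i : 'I_n => i < m) (enum 'I_n)).
  pose g := fun w => [exists i : 'I_n, [&& i < m, z i == w & eps i j]].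
  have hxj : xj \in s by rewrite inE eqxx.
  have hz : forall i : 'I_n, i < m -> z i \in s.
    move=> i Hi; rewrite inE; apply/orP; right; apply: map_f.
    by rewrite mem_filter Hi mem_enum.
  have zj : forall i : 'I_n, i < m -> perp E xj (z i) = false.
    move=> i Hi; apply/negP => /Hxj Hp.
    have := col_uniq _ _ _ Hp (Hz2 i Hi) => Hji.
    by move: Hi; rewrite -Hji ltnn.
  have Hs : forall a b, a \in s -> b \in s -> perp E a b -> a = b.
    have dec : forall a, a \in s -> a = xj \/ exists2 i : 'I_n, i < m & a = z i.
      move=> a; rewrite inE => /orP [/eqP ->|/mapP [i]]; first by left.
      by rewrite mem_filter => /andP [Hi _] ->; right; exists i.
    move=> a b /dec [->|[i Hi ->]] /dec [->|[i' Hi' ->]] //.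
    - by rewrite zj.
    - by rewrite perpC zj.
    - move=> Hp; congr (z _); apply: (col_uniq _ _ (z i')).
      + exact: col_closed (Hz2 i Hi) Hp.
      + exact: Hz2.
  have [v Hv] := ext_lemma HS (ee_inS g HS hxj Hs) (fun a b => erefl).
  have Hv' : forall w, w \in s -> E v w = outb E xj g w /\ E w v = inb E xj g w.
    by move=> w hw; exact: (Hv (@SeqSub _ s w hw)).
  have Pv : P j v.
    apply/Hxj; have [h1 h2] := Hv' _ hxj.
    by rewrite /perp h1 h2 /outb /inb perp_refl.
  have Ev : forall i : 'I_n, i < m -> E (z i) v = eps i j.
    move=> i Hi; have [_ ->] := Hv' _ (hz i Hi).
    rewrite /inb zj //=; apply/existsP/idP.
    - move=> [i' /and3P [Hi' /eqP Hzz He]].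
      have Hii := col_uniq _ _ _ (Hz2 i' Hi') (eq_ind_r (P i) (Hz2 i Hi) Hzz).
      by rewrite -Hii.
    - by move=> He; exists i; rewrite Hi eqxx He.
  exists (fun i => if i == j then v else z i); split; [|split].
  - move=> i Hi; have -> : (i == j) = false.
      apply/negP => /eqP Hij; move: Hi; rewrite Hij /= ltnNge Hkm //.
    exact: Hz1.
  - move=> i; case: eqP => [-> //|Hij]; rewrite ltnS leq_eqVlt => /orP [/eqP Hi|Hi].
      by exfalso; apply: Hij; apply: val_inj.
    exact: Hz2.
  - move=> i i' Hii' Hi' Hki'.
    have Hneq : (i == j) = false.
      apply/negP => /eqP Hij; move: Hii' Hi'; rewrite Hij /= ltnS => h1 h2.
      by move: (leq_trans h1 h2); rewrite ltnn.
    rewrite Hneq.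
    case: eqP => [->|Hij'].
      apply: Ev; move: Hii' Hi'; rewrite ltnS => h1 h2; exact: leq_trans h1 h2.
    move: Hi'; rewrite ltnS leq_eqVlt => /orP [/eqP Hi|Hi].
      by exfalso; apply: Hij'; apply: val_inj.
    exact: Hz3.
have [z [Hz1 [Hz2 Hz3]]] := main n (leqnn n).
exists z; split => //; split.
- by move=> i; apply: Hz2.
- by move=> i j Hij Hkj; apply: Hz3.
Qed.
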